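(* Suppose $P$ is a closed term of sort $(k,l)$. Then $\mathsf d_k\mathrel{;}P\otimes\mathsf I_k\ \sim\ \mathsf d_l\mathrel{;}\mathsf I_l\otimes P^\star$. Dually, $P\otimes\mathsf I_l\mathrel{;}\mathsf e_l\ \sim\ \mathsf I_k\otimes P^\star\mathrel{;}\mathsf e_k$. (Here $\otimes$ binds tighter than $;$.)
   Context: Wire calculus. Fix a set $\Sigma$ of signals and $\iota\notin\Sigma$; $L=\Sigma\cup\{\iota\}$; $\vec\iota$ denotes a word of $\iota$'s. Prefix strings are words over atoms: signal variables $x$, binders $\lambda x$, $\iota$, constants $\sigma\in\Sigma$. Terms: $P::= Y \mid P\mathrel{;}P\mid P\otimes P\mid \frac{u}{v}.P\mid P+P\mid \mu Y{:}\tau.P$ ($\tau$ a sort $(k,l)$). In $\frac{u}{v}.P$, variables $x$ with $\lambda x$ in $uv$ are bound (set $bd$). Sorting: $P:(k,n),R:(n,l)\Rightarrow P\mathrel{;}R:(k,l)$; $P:(k,l),Q:(m,n)\Rightarrow P\otimes Q:(k+m,l+n)$; $\frac{u}{v}.P:(|u|,|v|)$ when $P$ has that sort; $\mu Y{:}\tau.P:\tau$; $P+Q:\tau$ for $P,Q:\tau$. Closed terms only. Transitions $P\xrightarrow[\vec b]{\vec a}Q$ are generated by: (Refl) $P\xrightarrow[\vec\iota]{\vec\iota}P$; ($\iota$L) $P\xrightarrow[\vec\iota]{\vec\iota}R\xrightarrow[\vec b]{\vec a}Q$ gives $P\xrightarrow[\vec b]{\vec a}Q$; ($\iota$R) $P\xrightarrow[\vec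 b]{\vec a}R\xrightarrow[\vec\iota]{\vec\iota}Q$ gives $P\xrightarrow[\vec b]{\vec a}Q$; (Cut) $P\xrightarrow[\vec c]{\vec a}Q$, $R\xrightarrow[\vec b]{\vec c}S$ give $P\mathrel{;}R\xrightarrow[\vec b]{\vec a}Q\mathrel{;}S$; (Ten) $P\xrightarrow[\vec b]{\vec a}Q$, $R\xrightarrow[\vec d]{\vec c}S$ give $P\otimes R\xrightarrow[\vec b\vec d]{\vec a\vec c}Q\otimes S$; (Pref) for each $\sigma:bd\to L$, $\frac{u}{v}.P\xrightarrow[v|_\sigma]{u|_\sigma}P|_\sigma$; (Rec) $P[\mu Y.P/Y]\xrightarrow[\vec b]{\vec a}Q$ gives $\mu Y.P\xrightarrow[\vec b]{\vec a}Q$; ($+\iota$) $P\xrightarrow[\vec\iota]{\vec\iota}Q$, $R\xrightarrow[\vec\iota]{\vec\iota}S$ give $P+R\xrightarrow[\vec\iota]{\vec\iota}Q+S$; ($+$L/R) $P\xrightarrow[\vec b]{\vec a}Q$ with $\vec a\vec b$ not all $\iota$ gives $P+R\xrightarrow[\vec b]{\vec a}Q$ and $R+P\xrightarrow[\vec b]{\vec a}Q$. Bisimilarity $\sim$: $P\sim Q$ iff some relation $S\ni(P,Q)$ satisfies: if $(P',Q')\in S$ and $P'\xrightarrow[\vec b]{\vec a}P''$ then $Q'\xrightarrow[\vec b]{\vec a}Q''$ with $(P'',Q'')\in S$, and symmetrically. Constants: $\mathsf I_k=\mu Y.\frac{\lambda x_1\cdots\lambda x_k}{\lambda x_1\cdots\lambda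 x_k}.Y:(k,k)$, $\mathsf I=\mathsf I_1$; $\mathsf d=\mu Y.\frac{\epsilon}{\lambda x\lambda x}.Y:(0,2)$; $\mathsf e=\mu Y.\frac{\lambda x\lambda x}{\epsilon}.Y:(2,0)$; $\mathsf d_1=\mathsf d$, $\mathsf d_{n+1}=\mathsf d\mathrel{;}(\mathsf I\otimes\mathsf d_n\otimes\mathsf I)$; $\mathsf e_1=\mathsf e$, $\mathsf e_{n+1}=(\mathsf I_n\otimes\mathsf e\otimes\mathsf I_n)\mathrel{;}\mathsf e_n$; $\mathsf d_0=\mathsf e_0=\mathsf I_0=\mu Y{:}(0,0).Y$. The operation $(-)^\star$: on prefix strings it is string reversal (letters being the atoms $x$, $\lambda x$, $\iota$, $\sigma$); on terms it is defined by structural recursion: $Y^\star=Y$, $(R\mathrel{;}S)^\star=S^\star\mathrel{;}R^\star$, $(R\otimes S)^\star=S^\star\otimes R^\star$, $(\frac{u}{v}.R)^\star=\frac{v^\star}{u^\star}.R^\star$, $(R+S)^\star=R^\star+S^\star$, $(\mu Y.R)^\star=\mu Y.R^\star$. *)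

(* Defs.v *)
From mathcomp Require Import all_boot.
Set Implicit Arguments.
Unset Strict Implicit.
Unset Printing Implicit Defensive.

Section Wire.
Variable Sig : Type.

(* L = Sigma + {iota}; [None] is iota, [Some s] is the signal s *)
Definition L := option Sig.
Definition iotaL : L := None.
Definition iotas (n : nat) : seq L := nseq n iotaL.
Definition is_iota (a : L) : bool := if a is None then true else false.

(* atoms of prefix strings: signal variable x, binder lambda x, iota, constant *)
Inductive atom := AVar of nat | ABind of nat | AIota | AConst of Sig.

Inductive term :=
| TVar of nat
| Seq of term & term
| Ten of term & term
| Pre of seq atom & seq atom & term    (* u/v . P *)
| Sum of term & term
| Mu of nat & (nat * nat) & term.      (* mu Y : tau . P *)

Definition binders (w : seq atom) : seq nat :=
  flatten [seq (if a is ABind x then [:: x] else [::]) | a <- w].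

Definition atom_of (a : L) : atom := if a is Some s then AConst s else AIota.

Definition atom_sub (s : nat -> option L) (a : atom) : atom :=
  match a with
  | AVar x => if s x is Some v then atom_of v else AVar x
  | _ => a
  end.

Fixpoint ssub (s : nat -> option L) (P : term) : term :=
  match P with
  | TVar Y => TVar Y
  | Seq P1 P2 => Seq (ssub s P1) (ssub s P2)
  | Ten P1 P2 => Ten (ssub s P1) (ssub s P2)
  | Pre u v P1 =>
      let bd := binders (u ++ v) in
      let s' := fun x => if x \in bd then None else s x in
      Pre (map (atom_sub s') u) (map (atom_sub s') v) (ssub s' P1)
  | Sum P1 P2 => Sum (ssub s P1) (ssub s P2)
  | Mu Y t P1 => Mu Y t (ssub s P1)
  end.

Definition inst_atom (sigma : nat -> L) (a : atom) : L :=
  match a with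
  | AVar x => sigma x
  | ABind x => sigma x
  | AIota => iotaL
  | AConst c => Some c
  end.
Definition inst (sigma : nat -> L) (w : seq atom) : seq L := map (inst_atom sigma) w.

Definition body_inst (sigma : nat -> L) (u v : seq atom) (P : term) : term :=
  ssub (fun x => if x \in binders (u ++ v) then Some (sigma x) else None) P.

(* term substitution P[Q/Y] (used only with closed Q) *)
Fixpoint tsubst (Y : nat) (Q : term) (P : term) : term :=
  match P with
  | TVar Y' => if Y' == Y then Q else TVar Y'
  | Seq P1 P2 => Seq (tsubst Y Q P1) (tsubst Y Q P2)
  | Ten P1 P2 => Ten (tsubst Y Q P1) (tsubst Y Q P2)
  | Pre u v P1 => Pre u v (tsubst Y Q P1)
  | Sum P1 P2 => Sum (tsubst Y Q P1) (tsubst Y Q P2)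
  | Mu Y' t P1 => if Y' == Y then Mu Y' t P1 else Mu Y' t (tsubst Y Q P1)
  end.

Definition env := nat -> option (nat * nat).
Definition env0 : env := fun _ => None.
Definition upd (G : env) (Y : nat) (t : nat * nat) : env :=
  fun Z => if Z == Y then Some t else G Z.

Inductive has_sort : env -> term -> nat * nat -> Prop :=
| so_var G Y t : G Y = Some t -> has_sort G (TVar Y) t
| so_seq G P R k n l :
    has_sort G P (k, n) -> has_sort G R (n, l) -> has_sort G (Seq P R) (k, l)
| so_ten G P Q k l m n :
    has_sort G P (k, l) -> has_sort G Q (m, n) -> has_sort G (Ten P Q) (k + m, l + n)
| so_pre G u v P :
    has_sort G P (size u, size v) -> has_sort G (Pre u v P) (size u, size v)
| so_sum G P Q t : has_sort G P t -> has_sort G Q t -> has_sort G (Sum P Q) t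
| so_mu G Y t P : has_sort (upd G Y t) P t -> has_sort G (Mu Y t P) t.

Fixpoint sclosed (bound : seq nat) (P : term) : bool :=
  match P with
  | TVar _ => true
  | Seq P1 P2 | Ten P1 P2 | Sum P1 P2 => sclosed bound P1 && sclosed bound P2
  | Pre u v P1 =>
      let b := bound ++ binders (u ++ v) in
      all (fun a => if a is AVar x then x \in b else true) (u ++ v) && sclosed b P1
  | Mu _ _ P1 => sclosed bound P1
  end.

Fixpoint tclosed (bound : seq nat) (P : term) : bool :=
  match P with
  | TVar Y => Y \in bound
  | Seq P1 P2 | Ten P1 P2 | Sum P1 P2 => tclosed bound P1 && tclosed bound P2
  | Pre _ _ P1 => tclosed bound P1
  | Mu Y _ P1 => tclosed (Y :: bound) P1
  end.

Definition wclosed (P : term) : Prop := sclosed [::] P /\ tclosed [::] P.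

(* labelled transitions  step P a b Q  :  P --a (top) / b (bottom)--> Q *)
Inductive step : term -> seq L -> seq L -> term -> Prop :=
| st_refl P k l : has_sort env0 P (k, l) -> step P (iotas k) (iotas l) P
| st_iotaL P R Q m n a b :
    step P (iotas m) (iotas n) R -> step R a b Q -> step P a b Q
| st_iotaR P R Q m n a b :
    step P a b R -> step R (iotas m) (iotas n) Q -> step P a b Q
| st_cut P Q R S a b c :
    step P a c Q -> step R c b S -> step (Seq P R) a b (Seq Q S)
| st_ten P Q R S a b c d :
    step P a b Q -> step R c d S -> step (Ten P R) (a ++ c) (b ++ d) (Ten Q S)
| st_pre (sigma : nat -> L) u v P :
    step (Pre u v P) (inst sigma u) (inst sigma v) (body_inst sigma u v P)
| st_rec Y t P a b Q :
    step (tsubst Y (Mu Y t P) P) a b Q -> step (Mu Y t P) a b Q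
| st_sum_iota P Q R S m n :
    step P (iotas m) (iotas n) Q -> step R (iotas m) (iotas n) S ->
    step (Sum P R) (iotas m) (iotas n) (Sum Q S)
| st_sumL P R a b Q :
    step P a b Q -> ~~ all is_iota (a ++ b) -> step (Sum P R) a b Q
| st_sumR P R a b Q :
    step P a b Q -> ~~ all is_iota (a ++ b) -> step (Sum R P) a b Q.

Definition simulation (Rel : term -> term -> Prop) : Prop :=
  forall P Q, Rel P Q -> forall a b P', step P a b P' ->
    exists2 Q', step Q a b Q' & Rel P' Q'.

Definition bisim (P Q : term) : Prop :=
  exists Rel : term -> term -> Prop,
    [/\ Rel P Q, simulation Rel & simulation (fun x y => Rel y x)].

Definition I0 : term := Mu 0 (0, 0) (TVar 0).
Definition Ik (k : nat) : term :=
  if k is 0 then I0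
  else Mu 0 (k, k) (Pre (map ABind (iota 0 k)) (map ABind (iota 0 k)) (TVar 0)).
Definition I1 : term := Ik 1.
Definition dcon : term := Mu 0 (0, 2) (Pre [::] [:: ABind 0; ABind 0] (TVar 0)).
Definition econ : term := Mu 0 (2, 0) (Pre [:: ABind 0; ABind 0] [::] (TVar 0)).

Fixpoint dn (n : nat) : term :=
  match n with
  | 0 => I0
  | 1 => dcon
  | (m.+1 as n').+1 => Seq dcon (Ten (Ten I1 (dn n')) I1)
  end.

Fixpoint en (n : nat) : term :=
  match n with
  | 0 => I0
  | 1 => econ
  | (m.+1 as n').+1 => Seq (Ten (Ten (Ik n') econ) (Ik n')) (en n')
  end.

Fixpoint star (P : term) : term :=
  match P with
  | TVar Y => TVar Y
  | Seq R1 R2 => Seq (star R2) (star R1)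
  | Ten R1 R2 => Ten (star R2) (star R1)
  | Pre u v R => Pre (rev v) (rev u) (star R)
  | Sum R1 R2 => Sum (star R1) (star R2)
  | Mu Y (k, l) R => Mu Y (l, k) (star R)
  end.

End Wire.

(* Main.v *)
Require Import Defs.
From mathcomp Require Import all_boot zify.
Set Implicit Arguments.
Unset Strict Implicit.
Unset Printing Implicit Defensive.


Lemma sortSeq {Sig : Type} G (P R : term Sig) s : has_sort G (Seq P R) s ->
  exists n, has_sort G P (s.1, n) /\ has_sort G R (n, s.2).
Proof. by move=> H; inversion H; subst; exists n. Qed.
Lemma sortTen {Sig : Type} G (P R : term Sig) s : has_sort G (Ten P R) s ->
  exists k l m n, [/\ s = (k + m, l + n), has_sort G P (k, l) & has_sort G R (m, n)].
Proof. by move=> H; inversion H; subst; exists k, l, m, n. Qed.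
Lemma sortPre {Sig : Type} G u v (P : term Sig) s : has_sort G (Pre u v P) s ->
  s = (size u, size v) /\ has_sort G P s.
Proof. by move=> H; inversion H; subst. Qed.
Lemma sortSum {Sig : Type} G (P R : term Sig) s : has_sort G (Sum P R) s ->
  has_sort G P s /\ has_sort G R s.
Proof. by move=> H; inversion H; subst. Qed.
Lemma sortMu {Sig : Type} G Y t (P : term Sig) s : has_sort G (Mu Y t P) s ->
  s = t /\ has_sort (upd G Y t) P t.
Proof. by move=> H; inversion H; subst. Qed.
Lemma sortVar {Sig : Type} G Y s : has_sort G (@TVar Sig Y) s -> G Y = Some s.
Proof. by move=> H; inversion H; subst. Qed.

Lemma sort_uniq {Sig : Type} G (P : term Sig) s : has_sort G P s ->
  forall s', has_sort G P s' -> s = s'.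
Proof.
move=> HH; elim: HH => {G P s}.
- by move=> G Y t H s' /sortVar; congruence.
- move=> G P R k n l _ IHP _ IHR [k' l'] /sortSeq /= [n' [/IHP [<- <-] /IHR [->]]].
  done.
- move=> G P Q k l m n _ IHP _ IHQ s' /sortTen [k' [l' [m' [n' [-> /IHP [<- <-] /IHQ [<- <-]]]]]].
  done.
- by move=> G u v P _ _ s' /sortPre [].
- by move=> G P Q t _ IHP _ _ s' /sortSum [/IHP].
- by move=> G Y t P _ _ s' /sortMu [].
Qed.

Lemma ssub_ext {Sig : Type} (P : term Sig) f g : (forall x, f x = g x) -> ssub f P = ssub g P.
Proof.
elim: P f g => //=.
- by move=> P1 IH1 P2 IH2 f g H; rewrite (IH1 f g H) (IH2 f g H).
- by move=> P1 IH1 P2 IH2 f g H; rewrite (IH1 f g H) (IH2 f g H).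
- move=> u v P IH f g H.
  have H' : forall x, (if x \in binders (u ++ v) then None else f x) =
                      (if x \in binders (u ++ v) then None else g x) by move=> x; rewrite H.
  rewrite (IH _ _ H'); congr Pre; apply: eq_map => a; case: a => //= x; by rewrite H'.
- by move=> P1 IH1 P2 IH2 f g H; rewrite (IH1 f g H) (IH2 f g H).
- by move=> Y t P IH f g H; rewrite (IH f g H).
Qed.

Lemma binders_cat {Sig : Type} (a b : seq (atom Sig)) : binders (a ++ b) = binders a ++ binders b.
Proof. by rewrite /binders map_cat flatten_cat. Qed.

Lemma binders_rev {Sig : Type} (w : seq (atom Sig)) : binders (rev w) = rev (binders w).
Proof.
elim: w => // a w IH; rewrite rev_cons -cats1 binders_cat IH.
rewrite [in RHS](_ : a :: w = [:: a] ++ w) // binders_cat rev_cat.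
by case: a.
Qed.

Lemma mem_binders_rev {Sig : Type} (w : seq (atom Sig)) x : (x \in binders (rev w)) = (x \in binders w).
Proof. by rewrite binders_rev mem_rev. Qed.

Lemma star_ssub {Sig : Type} (P : term Sig) f : star (ssub f P) = ssub f (star P).
Proof.
elim: P f => //=.
- by move=> P1 IH1 P2 IH2 f; rewrite IH1 IH2.
- by move=> P1 IH1 P2 IH2 f; rewrite IH1 IH2.
- move=> u v P IH f; rewrite IH !map_rev; congr Pre.
  + congr rev; apply: eq_map => a; case: a => //= x.
    by rewrite !binders_cat !mem_cat !mem_binders_rev orbC.
  + congr rev; apply: eq_map => a; case: a => //= x.
    by rewrite !binders_cat !mem_cat !mem_binders_rev orbC.
  + apply: ssub_ext => x.
    by rewrite !binders_cat !mem_cat !mem_binders_rev orbC.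
- by move=> P1 IH1 P2 IH2 f; rewrite IH1 IH2.
- by move=> Y [k l] P IH f /=; rewrite IH.
Qed.

Lemma star_tsubst {Sig : Type} (P Q : term Sig) Y : star (tsubst Y Q P) = tsubst Y (star Q) (star P).
Proof.
elim: P => //=.
- by move=> Y'; case: (Y' == Y).
- by move=> P1 IH1 P2 IH2; rewrite IH1 IH2.
- by move=> P1 IH1 P2 IH2; rewrite IH1 IH2.
- by move=> u v P IH; rewrite IH.
- by move=> P1 IH1 P2 IH2; rewrite IH1 IH2.
- by move=> Y' [k l] P IH /=; case: (Y' == Y) => //=; rewrite IH.
Qed.

Lemma star_star {Sig : Type} (P : term Sig) : star (star P) = P.
Proof.
elim: P => //=.
- by move=> P1 IH1 P2 IH2; rewrite IH1 IH2.
- by move=> P1 IH1 P2 IH2; rewrite IH1 IH2.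
- by move=> u v P IH; rewrite IH !revK.
- by move=> P1 IH1 P2 IH2; rewrite IH1 IH2.
- by move=> Y [k l] P IH /=; rewrite IH.
Qed.

Lemma sort_weaken {Sig : Type} G (P : term Sig) s : has_sort G P s ->
  forall G', (forall Y t, G Y = Some t -> G' Y = Some t) -> has_sort G' P s.
Proof.
move=> HH; elim: HH => {G P s}.
- by move=> G Y t H G' HG; constructor; apply: HG.
- by move=> G P R k n l _ IHP _ IHR G' HG; apply: so_seq (IHP _ HG) (IHR _ HG).
- by move=> G P Q k l m n _ IHP _ IHQ G' HG; apply: so_ten (IHP _ HG) (IHQ _ HG).
- by move=> G u v P _ IH G' HG; apply: so_pre (IH _ HG).
- by move=> G P Q t _ IHP _ IHQ G' HG; apply: so_sum (IHP _ HG) (IHQ _ HG).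
- move=> G Y t P _ IH G' HG; apply: so_mu; apply: IH => Z u; rewrite /upd.
  by case: (Z == Y) => //; apply: HG.
Qed.

Lemma sort_tsubst {Sig : Type} G (P : term Sig) s : has_sort G P s ->
  forall Y t Q G', G Y = Some t -> has_sort env0 Q t ->
  (forall Z u, Z <> Y -> G Z = Some u -> G' Z = Some u) -> has_sort G' (tsubst Y Q P) s.
Proof.
move=> HH; elim: HH => {G P s}.
- move=> G Y' t H Y t0 Q G' HY HQ HG /=; case: eqP => [E|ne].
  + subst Y'; rewrite HY in H; case: H => E; subst; apply: (sort_weaken HQ) => Z u; rewrite /env0 => E; discriminate E.
  + by constructor; apply: HG.
- by move=> G P R k n l _ IHP _ IHR Y t Q G' HY HQ HG; apply: so_seq (IHP _ _ _ _ HY HQ HG) (IHR _ _ _ _ HY HQ HG).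
- by move=> G P R k l m n _ IHP _ IHR Y t Q G' HY HQ HG; apply: so_ten (IHP _ _ _ _ HY HQ HG) (IHR _ _ _ _ HY HQ HG).
- by move=> G u v P _ IH Y t Q G' HY HQ HG; apply: so_pre (IH _ _ _ _ HY HQ HG).
- by move=> G P R t' _ IHP _ IHR Y t Q G' HY HQ HG; apply: so_sum (IHP _ _ _ _ HY HQ HG) (IHR _ _ _ _ HY HQ HG).
- move=> G Y' t' P HP IH Y t Q G' HY HQ HG /=; case: eqP => [E|ne].
  + subst Y'; apply: so_mu; apply: (sort_weaken HP) => Z u; rewrite /upd.
    case: eqP => // ne; by apply: HG.
  + apply: so_mu; apply: (IH Y t) => //.
    * by rewrite /upd; case: eqP => // E; case: ne.
    * move=> Z u nZ; rewrite /upd; case: eqP => // _; by apply: HG.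
Qed.

Lemma so_pre' {Sig : Type} G (u v u' v' : seq (atom Sig)) P :
  has_sort G P (size u, size v) -> size u' = size u -> size v' = size v ->
  has_sort G (Pre u' v' P) (size u, size v).
Proof. by move=> H Eu Ev; rewrite -Eu -Ev; apply: so_pre; rewrite Eu Ev. Qed.

Lemma sort_ssub {Sig : Type} G (P : term Sig) s : has_sort G P s -> forall f, has_sort G (ssub f P) s.
Proof.
move=> HH; elim: HH => {G P s} /=.
- by move=> G Y t H f; constructor.
- by move=> G P R k n l _ IHP _ IHR f; apply: so_seq.
- by move=> G P Q k l m n _ IHP _ IHQ f; apply: so_ten.
- move=> G u v P _ IH f; apply: so_pre' => //; by rewrite size_map.
- by move=> G P Q t _ IHP _ IHQ f; apply: so_sum.
- by move=> G Y t P _ IH f; apply: so_mu.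
Qed.

Lemma step_sort {Sig : Type} (P : term Sig) a b Q : step P a b Q ->
  forall k l, has_sort env0 P (k, l) -> [/\ size a = k, size b = l & has_sort env0 Q (k, l)].
Proof.
move=> HH; elim: HH => {P a b Q}.
- move=> P k l H k' l' H'; have [<- <-] := sort_uniq H H'.
  by rewrite /iotas !size_nseq.
- move=> P R Q m n a b _ IH1 _ IH2 k l H.
  by have [_ _ HR] := IH1 _ _ H; apply: IH2.
- move=> P R Q m n a b _ IH1 _ IH2 k l H.
  have [-> -> HR] := IH1 _ _ H; have [_ _ HQ] := IH2 _ _ HR; done.
- move=> P Q R S a b c _ IH1 _ IH2 k l /sortSeq [n [H3 H5]].
  have [-> E1 HQ] := IH1 _ _ H3; subst; have [_ -> HS] := IH2 _ _ H5.
  by split=> //; apply: so_seq HQ HS.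
- move=> P Q R S a b c d _ IH1 _ IH2 k' l' /sortTen [k [l [m [n [[-> ->] H3 H5]]]]].
  have [E1 E2 HQ] := IH1 _ _ H3; have [E3 E4 HS] := IH2 _ _ H5.
  by rewrite !size_cat E1 E2 E3 E4; split=> //; apply: so_ten.
- move=> sigma u v P k l /sortPre [[-> ->] H].
  rewrite /inst !size_map; split=> //; rewrite /body_inst; apply: sort_ssub. exact H.
- move=> Y t P a b Q _ IH k l /sortMu [E H4]; subst t; apply: IH.
  apply: (sort_tsubst H4); [by rewrite /upd eqxx | exact: so_mu H4 |].
  by move=> Z u nZ; rewrite /upd; case: eqP.
- move=> P Q R S m n _ IH1 _ IH2 k l /sortSum [H3 H5].
  have [-> -> HQ] := IH1 _ _ H3; have [_ _ HS] := IH2 _ _ H5.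
  by split=> //; apply: so_sum.
- by move=> P R a b Q _ IH _ k l /sortSum [/IH].
- by move=> P R a b Q _ IH _ k l /sortSum [_ /IH].
Qed.
Definition swp (G : env) : env := fun Y => omap (fun t : nat * nat => (t.2, t.1)) (G Y).

Lemma sort_star {Sig : Type} G (P : term Sig) s : has_sort G P s ->
  forall G', (forall Y, G' Y = swp G Y) -> has_sort G' (star P) (s.2, s.1).
Proof.
move=> HH; elim: HH => {G P s} /=.
- by move=> G Y t H G' HG; constructor; rewrite HG /swp H.
- by move=> G P R k n l _ IHP _ IHR G' HG; apply: so_seq (IHR _ HG) (IHP _ HG).
- move=> G P Q k l m n _ IHP _ IHQ G' HG; rewrite [l + n]addnC [k + m]addnC.
  by apply: so_ten (IHQ _ HG) (IHP _ HG).
- move=> G u v P _ IH G' HG; rewrite -(size_rev u) -(size_rev v); apply: so_pre.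
  by rewrite !size_rev; apply: IH.
- by move=> G P Q t _ IHP _ IHQ G' HG; apply: so_sum (IHP _ HG) (IHQ _ HG).
- move=> G Y [k l] P _ IH G' HG /=; apply: so_mu; apply: (IH _) => Z.
  by rewrite /upd /swp; case: eqP => // _; rewrite HG.
Qed.

Lemma sort_star0 {Sig : Type} (P : term Sig) k l : has_sort env0 P (k, l) -> has_sort env0 (star P) (l, k).
Proof. by move=> H; apply: (sort_star H). Qed.

Lemma star_step {Sig : Type} (P : term Sig) a b Q : step P a b Q ->
  step (star P) (rev b) (rev a) (star Q).
Proof.
move=> HH; elim: HH => {P a b Q} /=.
- by move=> P k l H; rewrite /iotas !rev_nseq; apply: st_refl; apply: sort_star0.
- move=> P R Q m n a b _ IH1 _ IH2; rewrite /iotas !rev_nseq in IH1.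
  exact: st_iotaL IH1 IH2.
- move=> P R Q m n a b _ IH1 _ IH2; rewrite /iotas !rev_nseq in IH2.
  exact: st_iotaR IH1 IH2.
- by move=> P Q R S a b c _ IH1 _ IH2; apply: st_cut IH2 IH1.
- by move=> P Q R S a b c d _ IH1 _ IH2; rewrite !rev_cat; apply: st_ten IH2 IH1.
- move=> sigma u v P; rewrite /inst -!map_rev /body_inst star_ssub.
  have -> : ssub (fun x => if x \in binders (u ++ v) then Some (sigma x) else None) (star P) =
            ssub (fun x => if x \in binders (rev v ++ rev u) then Some (sigma x) else None) (star P).
    apply: ssub_ext => x; by rewrite !binders_cat !mem_cat !mem_binders_rev orbC.
  exact: (st_pre sigma (rev v) (rev u) (star P)).
- move=> Y [k l] P a b Q _ IH /=; apply: st_rec; by rewrite star_tsubst in IH.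
- move=> P Q R S m n _ IH1 _ IH2; rewrite /iotas !rev_nseq in IH1 IH2 *.
  exact: st_sum_iota IH1 IH2.
- move=> P R a b Q _ IH Hn; apply: st_sumL IH _; by rewrite all_cat !all_rev andbC -all_cat.
- move=> P R a b Q _ IH Hn; apply: st_sumR IH _; by rewrite all_cat !all_rev andbC -all_cat.
Qed.

Lemma star_step_inv {Sig : Type} (P : term Sig) a b Q : step (star P) a b Q ->
  step P (rev b) (rev a) (star Q).
Proof. by move/star_step; rewrite star_star. Qed.

Lemma cat_split {T : Type} (s1 s2 t1 t2 : seq T) : size s1 = size s2 -> s1 ++ t1 = s2 ++ t2 ->
  s1 = s2 /\ t1 = t2.
Proof.
elim: s1 s2 => [|x s1 IH] [|y s2] //= Hs E.
case: E => -> E; have [-> ->] := IH _ (eq_add_S _ _ Hs) E; done.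
Qed.

Lemma iotas_cat {Sig : Type} n (a1 a2 : seq (L Sig)) : iotas Sig n = a1 ++ a2 ->
  a1 = iotas Sig (size a1) /\ a2 = iotas Sig (size a2).
Proof.
elim: a1 n => [|x a1 IH] n /=.
- move=> <-; by rewrite /iotas size_nseq.
- case: n => [|n] //= [<- /IH [E1 E2]]; split=> //; by rewrite -E1.
Qed.

Lemma iotasD {Sig : Type} m n : iotas Sig (m + n) = iotas Sig m ++ iotas Sig n.
Proof. by rewrite /iotas nseqD. Qed.

Lemma ten_inv {Sig : Type} (X Y : term Sig) a b Q : step (Ten X Y) a b Q ->
  exists a1 a2 b1 b2 X' Y', [/\ a = a1 ++ a2, b = b1 ++ b2, Q = Ten X' Y',
    step X a1 b1 X' & step Y a2 b2 Y'].
Proof.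
move E: (Ten X Y) => T H; elim: H X Y E => {T a b Q}.
- move=> P k l H X Y E; subst P; have [k1 [l1 [k2 [l2 [[-> ->] H1 H2]]]]] := sortTen H.
  exists (iotas Sig k1), (iotas Sig k2), (iotas Sig l1), (iotas Sig l2), X, Y.
  by split; rewrite ?iotasD //; apply: st_refl.
- move=> P R Q m n a b _ IH1 _ IH2 X Y E.
  have [a1 [a2 [b1 [b2 [X1 [Y1 [Ea Eb ER S1 S2]]]]]]] := IH1 _ _ E.
  have [a1' [a2' [b1' [b2' [X2 [Y2 [-> -> -> S1' S2']]]]]]] := IH2 _ _ (esym ER).
  have [Ea1 Ea2] := iotas_cat Ea; have [Eb1 Eb2] := iotas_cat Eb.
  exists a1', a2', b1', b2', X2, Y2; split=> //.
  + by rewrite Ea1 Eb1 in S1; apply: st_iotaL S1 S1'.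
  + by rewrite Ea2 Eb2 in S2; apply: st_iotaL S2 S2'.
- move=> P R Q m n a b _ IH1 _ IH2 X Y E.
  have [a1 [a2 [b1 [b2 [X1 [Y1 [-> -> ER S1 S2]]]]]]] := IH1 _ _ E.
  have [a1' [a2' [b1' [b2' [X2 [Y2 [Ea Eb -> S1' S2']]]]]]] := IH2 _ _ (esym ER).
  have [Ea1 Ea2] := iotas_cat Ea; have [Eb1 Eb2] := iotas_cat Eb.
  exists a1, a2, b1, b2, X2, Y2; split=> //.
  + by rewrite Ea1 Eb1 in S1'; apply: st_iotaR S1 S1'.
  + by rewrite Ea2 Eb2 in S2'; apply: st_iotaR S2 S2'.
- by [].
- move=> P Q R S a b c d S1 _ S2 _ X Y [E1 E2]; subst.
  by exists a, c, b, d, Q, S.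
- by [].
- by [].
- by [].
- by [].
- by [].
Qed.

Lemma sort_eq {Sig : Type} G (P : term Sig) s s' : has_sort G P s -> s = s' -> has_sort G P s'.
Proof. by move=> H <-. Qed.

Lemma so_pre2 {Sig : Type} G (u v : seq (atom Sig)) P m n :
  size u = m -> size v = n -> has_sort G P (m, n) -> has_sort G (Pre u v P) (m, n).
Proof. by move=> <- <-; apply: so_pre. Qed.

Definition IkU (Sig : Type) (k : nat) : term Sig :=
  if k is 0 then I0 Sig
  else Pre (map (@ABind Sig) (iota 0 k)) (map (@ABind Sig) (iota 0 k)) (Ik Sig k).
Definition IS (Sig : Type) (k : nat) (J : term Sig) : Prop := J = Ik Sig k \/ J = IkU Sig k.

Lemma map_sub_ABind {Sig : Type} (s : seq nat) f :
  map (atom_sub f) (map (@ABind Sig) s) = map (@ABind Sig) s.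
Proof. by elim: s => //= x s ->. Qed.

Lemma ssub_Ik {Sig : Type} k f : ssub f (Ik Sig k) = Ik Sig k.
Proof. case: k => [|k] //=; by rewrite !map_sub_ABind. Qed.

Lemma sort_Ik {Sig : Type} G k : has_sort G (Ik Sig k) (k, k).
Proof.
case: k => [|k]; rewrite /Ik /I0; apply: so_mu.
- by constructor; rewrite /upd eqxx.
- apply: (so_pre2 (m := k.+1) (n := k.+1)); rewrite ?size_map ?size_iota //.
  by constructor; rewrite /upd eqxx.
Qed.

Lemma IS_sort {Sig : Type} k (J : term Sig) : IS k J -> has_sort env0 J (k, k).
Proof.
case=> ->; first exact: sort_Ik.
case: k => [|k]; first exact: (sort_Ik env0 0).
apply: so_pre2; rewrite ?size_map ?size_iota //; exact: sort_Ik.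
Qed.

Lemma IkU_inj {Sig : Type} k u v (P : term Sig) : Pre u v P = IkU Sig k.+1 ->
  [/\ u = map (@ABind Sig) (iota 0 k.+1), v = map (@ABind Sig) (iota 0 k.+1) & P = Ik Sig k.+1].
Proof. by rewrite /IkU => -[-> -> ->]. Qed.

Lemma Ik_unf {Sig : Type} k Y t (P : term Sig) : Mu Y t P = Ik Sig k -> tsubst Y (Mu Y t P) P = IkU Sig k.
Proof. by move=> E; rewrite E; case: k E => [|k] /= [-> _ ->]. Qed.

Lemma IS_step {Sig : Type} (J : term Sig) a b Q : step J a b Q ->
  forall k, IS k J -> [/\ a = b, size a = k & IS k Q].
Proof.
move=> HH; elim: HH => {J a b Q}.
- move=> P k l H k' HP; have [<- <-] := sort_uniq (IS_sort HP) H.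
  by rewrite /iotas size_nseq.
- move=> P R Q m n a b _ IH1 _ IH2 k HP; have [_ _ HR] := IH1 _ HP; exact: IH2.
- move=> P R Q m n a b _ IH1 _ IH2 k HP; have [-> -> HR] := IH1 _ HP.
  by have [_ _ HQ] := IH2 _ HR.
- by move=> P Q R S a b c _ _ _ _ k; case: k => [|k] [].
- by move=> P Q R S a b c d _ _ _ _ k; case: k => [|k] [].
- move=> sigma u v P k; case: k => [|k] [] // /IkU_inj [-> -> ->].
  split=> //; first by rewrite /inst !size_map size_iota.
  by left; rewrite /body_inst ssub_Ik.
- move=> Y t P a b Q _ IH k [E|E]; apply: IH; right.
  + exact: Ik_unf E.
  + by case: k E => [|k] //= E; exact: (@Ik_unf _ 0 _ _ _ E).
- by move=> P Q R S m n _ _ _ _ k; case: k => [|k] [].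
- by move=> P R a b Q _ _ _ k; case: k => [|k] [].
- by move=> P R a b Q _ _ _ k; case: k => [|k] [].
Qed.

Lemma inst_iota {Sig : Type} (w : seq (L Sig)) :
  inst (fun i => nth None w i) (map (@ABind Sig) (iota 0 (size w))) = w.
Proof. by rewrite /inst -map_comp; apply: mkseq_nth. Qed.

Lemma IS_go {Sig : Type} k (J : term Sig) w : IS k J -> size w = k -> step J w w (Ik Sig k).
Proof.
move=> HJ Hw; case: k HJ Hw => [|k] HJ Hw.
- case: w Hw => // _; have -> : J = Ik Sig 0 by case: HJ.
  exact: (st_refl (sort_Ik env0 0)).
- have S : step (IkU Sig k.+1) w w (Ik Sig k.+1).
    rewrite /IkU -{1 2}Hw -{3 4}(inst_iota w) Hw.
    have := st_pre (fun i => nth None w i) (map (@ABind Sig) (iota 0 k.+1))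
                    (map (@ABind Sig) (iota 0 k.+1)) (Ik Sig k.+1).
    by rewrite /body_inst ssub_Ik.
  case: HJ => ->; last exact: S.
  by apply: st_rec.
Qed.

Definition dconU (Sig : Type) : term Sig := Pre [::] [:: ABind Sig 0; ABind Sig 0] (dcon Sig).
Definition CS (Sig : Type) (D : term Sig) : Prop := D = dcon Sig \/ D = dconU Sig.
Definition econU (Sig : Type) : term Sig := Pre [:: ABind Sig 0; ABind Sig 0] [::] (econ Sig).
Definition CE (Sig : Type) (D : term Sig) : Prop := D = econ Sig \/ D = econU Sig.

Lemma sort_dcon {Sig : Type} G : has_sort G (dcon Sig) (0, 2).
Proof. apply: so_mu; apply: (so_pre2 (m := 0) (n := 2)) => //; constructor; by rewrite /upd eqxx. Qed.
Lemma sort_econ {Sig : Type} G : has_sort G (econ Sig) (2, 0).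
Proof. apply: so_mu; apply: (so_pre2 (m := 2) (n := 0)) => //; constructor; by rewrite /upd eqxx. Qed.

Lemma CS_sort {Sig : Type} (D : term Sig) : CS D -> has_sort env0 D (0, 2).
Proof. case=> ->; first exact: sort_dcon. apply: (so_pre2 (m := 0) (n := 2)) => //; exact: sort_dcon. Qed.
Lemma CE_sort {Sig : Type} (D : term Sig) : CE D -> has_sort env0 D (2, 0).
Proof. case=> ->; first exact: sort_econ. apply: (so_pre2 (m := 2) (n := 0)) => //; exact: sort_econ. Qed.

Lemma CS_step {Sig : Type} (D : term Sig) a b Q : step D a b Q -> CS D ->
  [/\ a = [::], exists x, b = [:: x; x] & CS Q].
Proof.
move=> HH; elim: HH => {D a b Q}.
- move=> P k l H HP; have [<- <-] := sort_uniq (CS_sort HP) H.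
  by split=> //; exists None.
- move=> P R Q m n a b _ IH1 _ IH2 HP; have [_ _ HR] := IH1 HP; exact: IH2.
- move=> P R Q m n a b _ IH1 _ IH2 HP; have [Ha Hb HR] := IH1 HP.
  by have [_ _ HQ] := IH2 HR.
- by move=> P Q R S a b c _ _ _ _ [].
- by move=> P Q R S a b c d _ _ _ _ [].
- move=> sigma u v P [] // [-> -> ->]; split=> //; first by exists (sigma 0).
  by left.
- move=> Y t P a b Q _ IH [] // [EY Et EP]; subst; apply: IH; by right.
- by move=> P Q R S m n _ _ _ _ [].
- by move=> P R a b Q _ _ _ [].
- by move=> P R a b Q _ _ _ [].
Qed.

Lemma CE_step {Sig : Type} (D : term Sig) a b Q : step D a b Q -> CE D ->
  [/\ b = [::], exists x, a = [:: x; x] & CE Q].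
Proof.
move=> HH; elim: HH => {D a b Q}.
- move=> P k l H HP; have [<- <-] := sort_uniq (CE_sort HP) H.
  by split=> //; exists None.
- move=> P R Q m n a b _ IH1 _ IH2 HP; have [_ _ HR] := IH1 HP; exact: IH2.
- move=> P R Q m n a b _ IH1 _ IH2 HP; have [Ha Hb HR] := IH1 HP.
  by have [_ _ HQ] := IH2 HR.
- by move=> P Q R S a b c _ _ _ _ [].
- by move=> P Q R S a b c d _ _ _ _ [].
- move=> sigma u v P [] // [-> -> ->]; split=> //; first by exists (sigma 0).
  by left.
- move=> Y t P a b Q _ IH [] // [EY Et EP]; subst; apply: IH; by right.
- by move=> P Q R S m n _ _ _ _ [].
- by move=> P R a b Q _ _ _ [].
- by move=> P R a b Q _ _ _ [].
Qed.

Lemma CS_go {Sig : Type} (D : term Sig) x : CS D -> step D [::] [:: x; x] (dcon Sig).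
Proof.
have S : step (dconU Sig) [::] [:: x; x] (dcon Sig) by exact: (st_pre (fun _ => x)).
by case=> ->; first apply: st_rec.
Qed.

Lemma CE_go {Sig : Type} (D : term Sig) x : CE D -> step D [:: x; x] [::] (econ Sig).
Proof.
have S : step (econU Sig) [:: x; x] [::] (econ Sig) by exact: (st_pre (fun _ => x)).
by case=> ->; first apply: st_rec.
Qed.

Fixpoint DS (Sig : Type) (k : nat) (D : term Sig) {struct k} : Prop :=
  match k with
  | 0 => D = I0 Sig
  | 1 => CS D
  | (m.+1 as k').+1 => exists D1 J1 D' J2,
      [/\ D = Seq D1 (Ten (Ten J1 D') J2), CS D1, IS 1 J1, DS k' D' & IS 1 J2]
  end.

Fixpoint ES (Sig : Type) (k : nat) (E : term Sig) {struct k} : Prop :=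
  match k with
  | 0 => E = I0 Sig
  | 1 => CE E
  | (m.+1 as k').+1 => exists J1 E1 J2 E',
      [/\ E = Seq (Ten (Ten J1 E1) J2) E', IS k' J1, CE E1, IS k' J2 & ES k' E']
  end.

Lemma DS_sort {Sig : Type} k (D : term Sig) : DS k D -> has_sort env0 D (0, k + k).
Proof.
elim: k D => [|k IH] D; first by move=> ->; exact: (sort_Ik env0 0).
case: k IH => [|k] IH; first exact: CS_sort.
move=> [D1 [J1 [D' [J2 [-> HD1 HJ1 HD' HJ2]]]]].
apply: (so_seq (n := 2)); first exact: CS_sort.
apply: sort_eq; first exact: so_ten (so_ten (IS_sort HJ1) (IH _ HD')) (IS_sort HJ2).
congr pair; lia.
Qed.

Lemma ES_sort {Sig : Type} k (E : term Sig) : ES k E -> has_sort env0 E (k + k, 0).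
Proof.
elim: k E => [|k IH] E; first by move=> ->; exact: (sort_Ik env0 0).
case: k IH => [|k] IH; first exact: CE_sort.
move=> [J1 [E1 [J2 [E' [-> HJ1 HE1 HJ2 HE']]]]].
apply: (so_seq (n := k.+1 + k.+1)); last exact: IH.
apply: sort_eq; first exact: so_ten (so_ten (IS_sort HJ1) (CE_sort HE1)) (IS_sort HJ2).
congr pair; lia.
Qed.

Lemma IS0 {Sig : Type} (Q : term Sig) : IS 0 Q -> Q = I0 Sig.
Proof. by case. Qed.

Lemma DS_step {Sig : Type} k (D : term Sig) a b Q : DS k D -> step D a b Q ->
  [/\ a = [::], exists2 w, size w = k & b = w ++ rev w & DS k Q].
Proof.
elim: k D a b Q => [|k IH] D a b Q.
  move=> HD HS; have HI : IS 0 D by left.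
  have [Eab Ha HQ] := IS_step HS HI.
  subst b; case: a Ha HS => // _ _; split=> //; first by exists [::].
  exact: IS0.
case: k IH => [|k] IH.
  move=> HD HS; have [-> [x ->] HQ] := CS_step HS HD; split=> //; by exists [:: x].
move=> HD HS; move: HD; elim: HS => {D a b Q}.
- move=> P k0 l0 H HP; have [<- <-] := sort_uniq (DS_sort HP) H.
  split=> //.
  by exists (iotas Sig k.+2); rewrite /iotas ?size_nseq // rev_nseq -nseqD.
- move=> P R Q m n a b _ IH1 _ IH2 HP; have [_ _ HR] := IH1 HP; exact: IH2 HR.
- move=> P R Q m n a b _ IH1 _ IH2 HP; have [Ha Hb HR] := IH1 HP.
  by have [_ _ HQ] := IH2 HR.
- move=> P Q1 R Q2 a b c S1 _ S2 _ [D1 [J1 [D' [J2 [E HD1 HJ1 HD' HJ2]]]]].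
  case: E => EP ER; subst P R.
  have [-> [x Ec] HQ1] := CS_step S1 HD1.
  have [c1 [c2 [b1 [b2 [X' [Y' [Ec' -> -> SX SY]]]]]]] := ten_inv S2.
  have [Ec2 Hc2 HY'] := IS_step SY HJ2.
  have [c11 [c12 [b11 [b12 [J1' [D'' [Ec1 -> -> SJ SD]]]]]]] := ten_inv SX.
  have [Ec11 Hc11 HJ1'] := IS_step SJ HJ1.
  have [Ec12 [w' Hw' ->] HD''] := IH _ _ _ _ HD' SD.
  subst c12 b11 b2 c1.
  move: Ec' Hc11 Hc2; clear SX SJ SY S2 S1; rewrite Ec; case: c11 => [|y [|]] //; case: c2 => [|z [|]] // [<- <-] _ _.
  split=> //.
    exists (x :: w'); first by rewrite /= Hw'.
    by rewrite rev_cons -cats1 /= -catA.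
  by exists Q1, J1', D'', Y'.
- by move=> P Q R S a b c d _ _ _ _ [? [? [? [? [E _ _ _ _]]]]].
- by move=> sigma u v P [? [? [? [? [E _ _ _ _]]]]].
- by move=> Y t P a b Q _ _ [? [? [? [? [E _ _ _ _]]]]].
- by move=> P Q R S m n _ _ _ _ [? [? [? [? [E _ _ _ _]]]]].
- by move=> P R a b Q _ _ _ [? [? [? [? [E _ _ _ _]]]]].
- by move=> P R a b Q _ _ _ [? [? [? [? [E _ _ _ _]]]]].
Qed.

Lemma ES_step {Sig : Type} k (D : term Sig) a b Q : ES k D -> step D a b Q ->
  [/\ b = [::], exists2 w, size w = k & a = w ++ rev w & ES k Q].
Proof.
elim: k D a b Q => [|k IH] D a b Q.
  move=> HD HS; have HI : IS 0 D by left.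
  have [Eab Ha HQ] := IS_step HS HI.
  subst b; case: a Ha HS => // _ _; split=> //; first by exists [::].
  exact: IS0.
case: k IH => [|k] IH.
  move=> HD HS; have [-> [x ->] HQ] := CE_step HS HD; split=> //; by exists [:: x].
move=> HD HS; move: HD; elim: HS => {D a b Q}.
- move=> P k0 l0 H HP; have [<- <-] := sort_uniq (ES_sort HP) H.
  split=> //.
  by exists (iotas Sig k.+2); rewrite /iotas ?size_nseq // rev_nseq -nseqD.
- move=> P R Q m n a b _ IH1 _ IH2 HP; have [_ _ HR] := IH1 HP; exact: IH2 HR.
- move=> P R Q m n a b _ IH1 _ IH2 HP; have [Ha Hb HR] := IH1 HP.
  by have [_ _ HQ] := IH2 HR.
- move=> P Q1 R Q2 a b c S1 _ S2 _ [J1 [E1 [J2 [E' [E HJ1 HE1 HJ2 HE']]]]].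
  case: E => EP ER; subst P R.
  have [-> [w' Hw' Ec] HQ2] := IH _ _ _ _ HE' S2.
  have [a1 [a2 [c1 [c2 [X' [Y' [-> Ec' -> SX SY]]]]]]] := ten_inv S1.
  have [Ea2 Ha2 HY'] := IS_step SY HJ2.
  have [a11 [a12 [c11 [c12 [J1' [E1' [-> Ec1 -> SJ SE]]]]]]] := ten_inv SX.
  have [Ea11 Ha11 HJ1'] := IS_step SJ HJ1.
  have [Ec12 [x ->] HE1'] := CE_step SE HE1.
  subst a2 a11 c12 c1.
  rewrite Ec cats0 in Ec'; have [Ew Ec2] := cat_split (etrans Hw' (esym Ha11)) Ec'.
  split=> //.
    exists (rcons w' x); first by rewrite size_rcons Hw'.
    by rewrite rev_rcons -cats1 -Ew -Ec2 -!catA.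
  by exists J1', E1', Y', Q2.
- by move=> P Q R S a b c d _ _ _ _ [? [? [? [? [E _ _ _ _]]]]].
- by move=> sigma u v P [? [? [? [? [E _ _ _ _]]]]].
- by move=> Y t P a b Q _ _ [? [? [? [? [E _ _ _ _]]]]].
- by move=> P Q R S m n _ _ _ _ [? [? [? [? [E _ _ _ _]]]]].
- by move=> P R a b Q _ _ _ [? [? [? [? [E _ _ _ _]]]]].
- by move=> P R a b Q _ _ _ [? [? [? [? [E _ _ _ _]]]]].
Qed.

Lemma DS_go {Sig : Type} k (D : term Sig) w : DS k D -> size w = k ->
  step D [::] (w ++ rev w) (dn Sig k).
Proof.
elim: k D w => [|k IH] D w.
  move=> -> ; case: w => // _; exact: (st_refl (sort_Ik env0 0)).
case: k IH => [|k] IH.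
  move=> HD; case: w => [|x [|]] // _; exact: CS_go.
move=> [D1 [J1 [D' [J2 [-> HD1 HJ1 HD' HJ2]]]]].
case: w => [|x w'] //= [Hw'].
have S1 := CS_go x HD1.
have S2 := st_ten (st_ten (IS_go (w := [:: x]) HJ1 erefl) (IH _ _ HD' Hw')) (IS_go (w := [:: x]) HJ2 erefl).
have -> : x :: w' ++ rev (x :: w') = ([:: x] ++ (w' ++ rev w')) ++ [:: x].
  by rewrite rev_cons -cats1 /= -catA.
exact: (st_cut S1 S2).
Qed.

Lemma ES_go {Sig : Type} k (D : term Sig) w : ES k D -> size w = k ->
  step D (w ++ rev w) [::] (en Sig k).
Proof.
elim: k D w => [|k IH] D w.
  move=> -> ; case: w => // _; exact: (st_refl (sort_Ik env0 0)).
case: k IH => [|k] IH.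
  move=> HD; case: w => [|x [|]] // _; exact: CE_go.
move=> [J1 [E1 [J2 [E' [-> HJ1 HE1 HJ2 HE']]]]].
case/lastP: w => [|w' x] //; rewrite size_rcons => -[Hw'].
have S1 := st_ten (st_ten (IS_go HJ1 Hw') (CE_go x HE1)) (IS_go (w := rev w') HJ2 (etrans (size_rev w') Hw')).
rewrite cats0 in S1.
have S2 := IH _ _ HE' Hw'.
have -> : rcons w' x ++ rev (rcons w' x) = (w' ++ [:: x; x]) ++ rev w'.
  by rewrite rev_rcons -cats1 -!catA.
exact: (st_cut S1 S2).
Qed.

Lemma DS_dn {Sig : Type} k : DS k (dn Sig k).
Proof.
elim: k => [|k IH] //; case: k IH => [|k] IH; first by left.
exists (dcon Sig), (I1 Sig), (dn Sig k.+1), (I1 Sig); split=> //; by left.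
Qed.

Lemma ES_en {Sig : Type} k : ES k (en Sig k).
Proof.
elim: k => [|k IH] //; case: k IH => [|k] IH; first by left.
exists (Ik Sig k.+1), (econ Sig), (Ik Sig k.+1), (en Sig k.+1); split=> //; by left.
Qed.

Lemma sim_dl {Sig : Type} k l (S : term Sig) a b S' : step S a b S' ->
  forall X D I, has_sort env0 X (k, l) -> DS k D -> IS k I -> S = Seq D (Ten X I) ->
  exists X' D2 I2, [/\ has_sort env0 X' (k, l), DS k D2, IS k I2, S' = Seq D2 (Ten X' I2) &
    forall D' I', DS l D' -> IS l I' -> exists D2' I2', [/\ DS l D2', IS l I2' &
      step (Seq D' (Ten I' (star X))) a b (Seq D2' (Ten I2' (star X')))]].
Proof.
move=> HH; elim: HH => {S a b S'}.
- move=> P k0 l0 HP X D I HX HD HI E; subst P.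
  have HL := so_seq (DS_sort HD) (so_ten HX (IS_sort HI)).
  have [<- <-] := sort_uniq HL HP.
  exists X, D, I; split=> // D' I' HD' HI'; exists D', I'; split=> //.
  apply: st_refl; exact: so_seq (DS_sort HD') (so_ten (IS_sort HI') (sort_star0 HX)).
- move=> P R Q m n a b _ IH1 _ IH2 X D I HX HD HI E.
  have [X1 [D1 [I1 [HX1 HD1 HI1 ER F1]]]] := IH1 _ _ _ HX HD HI E.
  have [X2 [D2 [I2 [HX2 HD2 HI2 EQ F2]]]] := IH2 _ _ _ HX1 HD1 HI1 ER.
  exists X2, D2, I2; split=> // D' I' HD' HI'.
  have [D1' [I1' [HD1' HI1' T1]]] := F1 _ _ HD' HI'.
  have [D2' [I2' [HD2' HI2' T2]]] := F2 _ _ HD1' HI1'.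
  exists D2', I2'; split=> //; exact: st_iotaL T1 T2.
- move=> P R Q m n a b _ IH1 _ IH2 X D I HX HD HI E.
  have [X1 [D1 [I1 [HX1 HD1 HI1 ER F1]]]] := IH1 _ _ _ HX HD HI E.
  have [X2 [D2 [I2 [HX2 HD2 HI2 EQ F2]]]] := IH2 _ _ _ HX1 HD1 HI1 ER.
  exists X2, D2, I2; split=> // D' I' HD' HI'.
  have [D1' [I1' [HD1' HI1' T1]]] := F1 _ _ HD' HI'.
  have [D2' [I2' [HD2' HI2' T2]]] := F2 _ _ HD1' HI1'.
  exists D2', I2'; split=> //; exact: st_iotaR T1 T2.
- move=> P Q R S a b c S1 _ S2 _ X D I HX HD HI [EP ER]; subst P R.
  have [-> [w Hw Ec] HQ] := DS_step HD S1.
  have [c1 [c2 [b1 [b2 [X' [I2 [Ec' -> -> SX SI]]]]]]] := ten_inv S2.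
  have [Ec2 Hc2 HI2] := IS_step SI HI.
  have [Hc1 Hb1 HX'] := step_sort SX HX.
  subst c2; rewrite Ec in Ec'.
  have [Ew Erw] := cat_split (etrans Hw (esym Hc1)) Ec'.
  exists X', Q, I2; split=> // D' I' HD' HI'.
  exists (dn Sig l), (Ik Sig l); split; [exact: DS_dn | by left |].
  apply: st_cut (DS_go (w := b1) HD' Hb1) _.
  apply: st_ten (IS_go HI' Hb1) _.
  by have := star_step SX; rewrite -Erw Ew.
- by move=> P Q R S a b c d _ _ _ _ X D I _ _ _ E.
- by move=> sigma u v P X D I _ _ _ E.
- by move=> Y t P a b Q _ _ X D I _ _ _ E.
- by move=> P Q R S m n _ _ _ _ X D I _ _ _ E.
- by move=> P R a b Q _ _ _ X D I _ _ _ E.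
- by move=> P R a b Q _ _ _ X D I _ _ _ E.
Qed.

Lemma sim_dr {Sig : Type} k l (T : term Sig) a b T' : step T a b T' ->
  forall X D' I', has_sort env0 X (k, l) -> DS l D' -> IS l I' -> T = Seq D' (Ten I' (star X)) ->
  exists X' D2' I2', [/\ has_sort env0 X' (k, l), DS l D2', IS l I2', T' = Seq D2' (Ten I2' (star X')) &
    forall D I, DS k D -> IS k I -> exists D2 I2, [/\ DS k D2, IS k I2 &
      step (Seq D (Ten X I)) a b (Seq D2 (Ten X' I2))]].
Proof.
move=> HH; elim: HH => {T a b T'}.
- move=> P k0 l0 HP X D' I' HX HD' HI' E; subst P.
  have HR := so_seq (DS_sort HD') (so_ten (IS_sort HI') (sort_star0 HX)).
  have [<- <-] := sort_uniq HR HP.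
  exists X, D', I'; split=> // D I HD HI; exists D, I; split=> //.
  apply: st_refl; exact: so_seq (DS_sort HD) (so_ten HX (IS_sort HI)).
- move=> P R Q m n a b _ IH1 _ IH2 X D I HX HD HI E.
  have [X1 [D1 [I1 [HX1 HD1 HI1 ER F1]]]] := IH1 _ _ _ HX HD HI E.
  have [X2 [D2 [I2 [HX2 HD2 HI2 EQ F2]]]] := IH2 _ _ _ HX1 HD1 HI1 ER.
  exists X2, D2, I2; split=> // D' I' HD' HI'.
  have [D1' [I1' [HD1' HI1' T1]]] := F1 _ _ HD' HI'.
  have [D2' [I2' [HD2' HI2' T2]]] := F2 _ _ HD1' HI1'.
  exists D2', I2'; split=> //; exact: st_iotaL T1 T2.
- move=> P R Q m n a b _ IH1 _ IH2 X D I HX HD HI E.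
  have [X1 [D1 [I1 [HX1 HD1 HI1 ER F1]]]] := IH1 _ _ _ HX HD HI E.
  have [X2 [D2 [I2 [HX2 HD2 HI2 EQ F2]]]] := IH2 _ _ _ HX1 HD1 HI1 ER.
  exists X2, D2, I2; split=> // D' I' HD' HI'.
  have [D1' [I1' [HD1' HI1' T1]]] := F1 _ _ HD' HI'.
  have [D2' [I2' [HD2' HI2' T2]]] := F2 _ _ HD1' HI1'.
  exists D2', I2'; split=> //; exact: st_iotaR T1 T2.
- move=> P Q R S a b c S1 _ S2 _ X D' I' HX HD' HI' [EP ER]; subst P R.
  have [-> [w Hw Ec] HQ] := DS_step HD' S1.
  have [c1 [c2 [b1 [b2 [I2 [Y [Ec' -> -> SI SY]]]]]]] := ten_inv S2.
  have [Ec1 Hc1 HI2] := IS_step SI HI'.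
  have SX := star_step_inv SY.
  have [Hb2 Hc2 HX'] := step_sort SX HX.
  subst c1; rewrite Ec in Ec'.
  have [Ew Erw] := cat_split (etrans Hw (esym Hc1)) Ec'.
  exists (star Y), Q, I2; split=> //; first by rewrite star_star.
  move=> D I HD HI.
  exists (dn Sig k), (Ik Sig k); split; [exact: DS_dn | by left |].
  have Hb2' : size b2 = k by rewrite -Hb2 size_rev.
  have G1 := DS_go (w := rev b2) HD Hb2; rewrite revK in G1.
  have := st_cut G1 (st_ten SX (IS_go HI Hb2')).
  by rewrite -Erw revK Ew.
- by move=> P Q R S a b c d _ _ _ _ X D I _ _ _ E.
- by move=> sigma u v P X D I _ _ _ E.
- by move=> Y t P a b Q _ _ X D I _ _ _ E.
- by move=> P Q R S m n _ _ _ _ X D I _ _ _ E.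
- by move=> P R a b Q _ _ _ X D I _ _ _ E.
- by move=> P R a b Q _ _ _ X D I _ _ _ E.
Qed.

Lemma sim_el {Sig : Type} k l (S : term Sig) a b S' : step S a b S' ->
  forall X I E, has_sort env0 X (k, l) -> IS l I -> ES l E -> S = Seq (Ten X I) E ->
  exists X' I2 E2, [/\ has_sort env0 X' (k, l), IS l I2, ES l E2, S' = Seq (Ten X' I2) E2 &
    forall I' E', IS k I' -> ES k E' -> exists I2' E2', [/\ IS k I2', ES k E2' &
      step (Seq (Ten I' (star X)) E') a b (Seq (Ten I2' (star X')) E2')]].
Proof.
move=> HH; elim: HH => {S a b S'}.
- move=> P k0 l0 HP X I E HX HI HE EE; subst P.
  have HL := so_seq (so_ten HX (IS_sort HI)) (ES_sort HE).
  have [<- <-] := sort_uniq HL HP.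
  exists X, I, E; split=> // I' E' HI' HE'; exists I', E'; split=> //.
  apply: st_refl; exact: so_seq (so_ten (IS_sort HI') (sort_star0 HX)) (ES_sort HE').
- move=> P R Q m n a b _ IH1 _ IH2 X D I HX HD HI E.
  have [X1 [D1 [I1 [HX1 HD1 HI1 ER F1]]]] := IH1 _ _ _ HX HD HI E.
  have [X2 [D2 [I2 [HX2 HD2 HI2 EQ F2]]]] := IH2 _ _ _ HX1 HD1 HI1 ER.
  exists X2, D2, I2; split=> // D' I' HD' HI'.
  have [D1' [I1' [HD1' HI1' T1]]] := F1 _ _ HD' HI'.
  have [D2' [I2' [HD2' HI2' T2]]] := F2 _ _ HD1' HI1'.
  exists D2', I2'; split=> //; exact: st_iotaL T1 T2.
- move=> P R Q m n a b _ IH1 _ IH2 X D I HX HD HI E.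
  have [X1 [D1 [I1 [HX1 HD1 HI1 ER F1]]]] := IH1 _ _ _ HX HD HI E.
  have [X2 [D2 [I2 [HX2 HD2 HI2 EQ F2]]]] := IH2 _ _ _ HX1 HD1 HI1 ER.
  exists X2, D2, I2; split=> // D' I' HD' HI'.
  have [D1' [I1' [HD1' HI1' T1]]] := F1 _ _ HD' HI'.
  have [D2' [I2' [HD2' HI2' T2]]] := F2 _ _ HD1' HI1'.
  exists D2', I2'; split=> //; exact: st_iotaR T1 T2.
- move=> P Q R S a b c S1 _ S2 _ X I E HX HI HE [EP ER]; subst P R.
  have [-> [w Hw Ec] HQ] := ES_step HE S2.
  have [a1 [a2 [c1 [c2 [X' [I2 [-> Ec' -> SX SI]]]]]]] := ten_inv S1.
  have [Ea2 Ha2 HI2] := IS_step SI HI.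
  have [Ha1 Hc1 HX'] := step_sort SX HX.
  subst a2; rewrite Ec in Ec'.
  have [Ew Erw] := cat_split (etrans Hw (esym Hc1)) Ec'.
  exists X', I2, S; split=> // I' E' HI' HE'.
  exists (Ik Sig k), (en Sig k); split; [by left | exact: ES_en |].
  have := st_cut (st_ten (IS_go HI' Ha1) (star_step SX)) (ES_go (w := a1) HE' Ha1).
  by rewrite -Erw Ew.
- by move=> P Q R S a b c d _ _ _ _ X D I _ _ _ E.
- by move=> sigma u v P X D I _ _ _ E.
- by move=> Y t P a b Q _ _ X D I _ _ _ E.
- by move=> P Q R S m n _ _ _ _ X D I _ _ _ E.
- by move=> P R a b Q _ _ _ X D I _ _ _ E.
- by move=> P R a b Q _ _ _ X D I _ _ _ E.
Qed.

Lemma sim_er {Sig : Type} k l (T : term Sig) a b T' : step T a b T' ->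
  forall X I' E', has_sort env0 X (k, l) -> IS k I' -> ES k E' -> T = Seq (Ten I' (star X)) E' ->
  exists X' I2' E2', [/\ has_sort env0 X' (k, l), IS k I2', ES k E2', T' = Seq (Ten I2' (star X')) E2' &
    forall I E, IS l I -> ES l E -> exists I2 E2, [/\ IS l I2, ES l E2 &
      step (Seq (Ten X I) E) a b (Seq (Ten X' I2) E2)]].
Proof.
move=> HH; elim: HH => {T a b T'}.
- move=> P k0 l0 HP X I' E' HX HI' HE' EE; subst P.
  have HR := so_seq (so_ten (IS_sort HI') (sort_star0 HX)) (ES_sort HE').
  have [<- <-] := sort_uniq HR HP.
  exists X, I', E'; split=> // I E HI HE; exists I, E; split=> //.
  apply: st_refl; exact: so_seq (so_ten HX (IS_sort HI)) (ES_sort HE).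
- move=> P R Q m n a b _ IH1 _ IH2 X D I HX HD HI E.
  have [X1 [D1 [I1 [HX1 HD1 HI1 ER F1]]]] := IH1 _ _ _ HX HD HI E.
  have [X2 [D2 [I2 [HX2 HD2 HI2 EQ F2]]]] := IH2 _ _ _ HX1 HD1 HI1 ER.
  exists X2, D2, I2; split=> // D' I' HD' HI'.
  have [D1' [I1' [HD1' HI1' T1]]] := F1 _ _ HD' HI'.
  have [D2' [I2' [HD2' HI2' T2]]] := F2 _ _ HD1' HI1'.
  exists D2', I2'; split=> //; exact: st_iotaL T1 T2.
- move=> P R Q m n a b _ IH1 _ IH2 X D I HX HD HI E.
  have [X1 [D1 [I1 [HX1 HD1 HI1 ER F1]]]] := IH1 _ _ _ HX HD HI E.
  have [X2 [D2 [I2 [HX2 HD2 HI2 EQ F2]]]] := IH2 _ _ _ HX1 HD1 HI1 ER.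
  exists X2, D2, I2; split=> // D' I' HD' HI'.
  have [D1' [I1' [HD1' HI1' T1]]] := F1 _ _ HD' HI'.
  have [D2' [I2' [HD2' HI2' T2]]] := F2 _ _ HD1' HI1'.
  exists D2', I2'; split=> //; exact: st_iotaR T1 T2.
- move=> P Q R S a b c S1 _ S2 _ X I' E' HX HI' HE' [EP ER]; subst P R.
  have [-> [w Hw Ec] HQ] := ES_step HE' S2.
  have [a1 [a2 [c1 [c2 [I2 [Y [-> Ec' -> SI SY]]]]]]] := ten_inv S1.
  have [Ea1 Ha1 HI2] := IS_step SI HI'.
  have SX := star_step_inv SY.
  have [Hc2 Ha2 HX'] := step_sort SX HX.
  subst a1; rewrite Ec in Ec'.
  have [Ew Erw] := cat_split (etrans Hw (esym Ha1)) Ec'.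
  exists (star Y), I2, S; split=> //; first by rewrite star_star.
  move=> I E HI HE.
  exists (Ik Sig l), (en Sig l); split; [by left | exact: ES_en |].
  have Ha2' : size a2 = l by rewrite -Ha2 size_rev.
  have G1 := ES_go (w := rev a2) HE Ha2; rewrite revK in G1.
  have := st_cut (st_ten SX (IS_go HI Ha2')) G1.
  by rewrite -Erw revK Ew.
- by move=> P Q R S a b c d _ _ _ _ X D I _ _ _ E.
- by move=> sigma u v P X D I _ _ _ E.
- by move=> Y t P a b Q _ _ X D I _ _ _ E.
- by move=> P Q R S m n _ _ _ _ X D I _ _ _ E.
- by move=> P R a b Q _ _ _ X D I _ _ _ E.
- by move=> P R a b Q _ _ _ X D I _ _ _ E.
Qed.

Unset Implicit Arguments.
Theorem mainTheorem7 (Sig : Type) (P : term Sig) (k l : nat) :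
  wclosed P -> has_sort (@env0) P (k, l) ->
  bisim (Seq (dn Sig k) (Ten P (Ik Sig k))) (Seq (dn Sig l) (Ten (Ik Sig l) (star P))) /\
  bisim (Seq (Ten P (Ik Sig l)) (en Sig l)) (Seq (Ten (Ik Sig k) (star P)) (en Sig k)).
Proof.
move=> _ HP; split.
- exists (fun S T => exists X D I D' I', [/\ has_sort env0 X (k, l), DS k D /\ IS k I,
            DS l D' /\ IS l I', S = Seq D (Ten X I) & T = Seq D' (Ten I' (star X))]).
  split.
  + exists P, (dn Sig k), (Ik Sig k), (dn Sig l), (Ik Sig l); split=> //; split;
      by [exact: DS_dn | left].
  + move=> S T [X [D [I [D' [I' [HX [HD HI] [HD' HI'] ES ET]]]]]] a b S' HS.
    have [X' [D2 [I2 [HX' HD2 HI2 -> F]]]] := sim_dl HS HX HD HI ES.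
    have [D2' [I2' [HD2' HI2' T2]]] := F _ _ HD' HI'.
    exists (Seq D2' (Ten I2' (star X'))); first by rewrite ET.
    by exists X', D2, I2, D2', I2'.
  + move=> T S [X [D [I [D' [I' [HX [HD HI] [HD' HI'] ES ET]]]]]] a b T' HT.
    have [X' [D2' [I2' [HX' HD2' HI2' -> F]]]] := sim_dr HT HX HD' HI' ET.
    have [D2 [I2 [HD2 HI2 T2]]] := F _ _ HD HI.
    exists (Seq D2 (Ten X' I2)); first by rewrite ES.
    by exists X', D2, I2, D2', I2'.
- exists (fun S T => exists X I E I' E', [/\ has_sort env0 X (k, l), IS l I /\ ES l E,
            IS k I' /\ ES k E', S = Seq (Ten X I) E & T = Seq (Ten I' (star X)) E']).
  split.
  + exists P, (Ik Sig l), (en Sig l), (Ik Sig k), (en Sig k); split=> //; split;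
      by [exact: ES_en | left].
  + move=> S T [X [I [E [I' [E' [HX [HI HE] [HI' HE'] ES ET]]]]]] a b S' HS.
    have [X' [I2 [E2 [HX' HI2 HE2 -> F]]]] := sim_el HS HX HI HE ES.
    have [I2' [E2' [HI2' HE2' T2]]] := F _ _ HI' HE'.
    exists (Seq (Ten I2' (star X')) E2'); first by rewrite ET.
    by exists X', I2, E2, I2', E2'.
  + move=> T S [X [I [E [I' [E' [HX [HI HE] [HI' HE'] ES ET]]]]]] a b T' HT.
    have [X' [I2' [E2' [HX' HI2' HE2' -> F]]]] := sim_er HT HX HI' HE' ET.
    have [I2 [E2 [HI2 HE2 T2]]] := F _ _ HI HE.
    exists (Seq (Ten X' I2) E2); first by rewrite ES.
    by exists X', I2, E2, I2', E2'.
Qed.
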